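(* Let $S$ be a $1$-synchronizable system. Let $\tau\in T_0(S)$ and $a_1,\dots,a_n\in\Sigma_M$ be such that $\tau\cdot !a_1\cdots !a_n\in T_n(S)$ and $\mathrm{src}(a_i)=\mathrm{src}(a_j)$ for all $i,j\in\{1,\dots,n\}$. Then $\tau\cdot !?a_1\cdots !?a_n\in T_0(S)$.
   Context: A message set $M=(\Sigma_M,N,\mathrm{src},\mathrm{dst})$: finite set of messages, $N\ge1$ peers, $\mathrm{src}(a)\neq\mathrm{dst}(a)\in\{1,\dots,N\}$. Actions $!a$ (by peer $\mathrm{src}(a)$), $?a$ (by peer $\mathrm{dst}(a)$); traces are finite action sequences; $!?a$ abbreviates $!a\cdot?a$. For a trace $\tau$, $\pi_!(\tau)$ is the sequence of sent messages; $\mathrm{buf}_{i\to j}(\tau)$ is the word $w$ (if any) with (sent on $i\to j$) $=$ (received on $i\to j$)$\cdot w$. $\tau$ is FIFO ($k$-bounded FIFO) if for all $i,j$ and prefixes $\tau'$, $\mathrm{buf}_{i\to j}(\tau')$ is defined (and has length $\le k$); synchronous if of the form $!?a_1\cdots!?a_k$. A system $S=(P_1,\dots,P_N)$: finite automata $P_i$ (all states accepting) over actions of peer $i$, with one FIFO channel per ordered pair $i\neq j$. A configuration: one control state per peer and contents $w_{i,j}$ of channels; stable if all channels empty. $!a$ ($\mathrm{src}(a)=i,\mathrm{dst}(a)=j$) moves $P_i$ and appends $a$ to $w_{i,j}$; $?a$ moves $P_j$ and removes $a$ from the head of $w_{i,j}$; $c_0$ is the initial configuration. $T_k(S)$ ($k\ge1$):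 $k$-bounded FIFO traces $\tau$ with $c_0\xrightarrow{\tau}c$ for some $c$; $T_0(S)$: synchronous such traces; $T_\omega(S)=\bigcup_kT_k(S)$. $ST_k(S)=\{\pi_!(\tau)\mid\tau\in T_k(S)\}\cup\{(\pi_!(\tau),c)\mid c_0\xrightarrow{\tau}c,\ c\text{ stable},\ \tau\in T_k(S)\}$; $S$ is $1$-synchronizable if $ST_0(S)=ST_1(S)$. (Here $n$ in the claim denotes a number of messages, not the number of peers.) *)

(* Defs.v *)
From mathcomp Require Import all_boot.
Set Implicit Arguments. Unset Strict Implicit. Unset Printing Implicit Defensive.

(* A message set M = (Sigma_M, N, src, dst). Peers are 'I_N (i.e. {0..N-1}). *)
Record msgset := MsgSet {
  msg : finType;
  npeers : nat;
  npeers_pos : 0 < npeers;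
  src : msg -> 'I_npeers;
  dst : msg -> 'I_npeers;
  src_neq_dst : forall a, src a != dst a
}.

Inductive action (T : Type) := Snd of T | Rcv of T.
Arguments Snd {T}. Arguments Rcv {T}.

Section Defs.
Variable Ms : msgset.
Notation M := (msg Ms).
Notation N := (npeers Ms).

Definition actor (x : action M) : 'I_N :=
  match x with Snd a => src a | Rcv a => dst a end.

Definition pi_send (tau : seq (action M)) : seq M :=
  pmap (fun x => if x is Snd a then Some a else None) tau.

Definition sent_on (i j : 'I_N) (tau : seq (action M)) : seq M :=
  pmap (fun x => if x is Snd a then
                   (if (src a == i) && (dst a == j) then Some a else None)
                 else None) tau.
Definition recv_on (i j : 'I_N) (tau : seq (action M)) : seq M :=
  pmap (fun x => if x is Rcv a then
                   (if (src a == i) && (dst a == j) then Some a else None)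
                 else None) tau.

(* k-bounded FIFO trace: for every prefix and channel, buf is defined
   (sent = received ++ w) and |w| <= k. *)
Definition kbounded_fifo (k : nat) (tau : seq (action M)) : Prop :=
  forall (m : nat) (i j : 'I_N), exists w : seq M,
    sent_on i j (take m tau) = recv_on i j (take m tau) ++ w /\ size w <= k.

Definition sync_word (s : seq M) : seq (action M) :=
  flatten [seq [:: Snd a; Rcv a] | a <- s].
Definition synchronous (tau : seq (action M)) : Prop :=
  exists s : seq M, tau = sync_word s.

(* A system: one finite automaton per peer (all states accepting).  All
   peers' state spaces are taken inside a common finite type [state]; each
   automaton only has transitions labelled by actions of its own peer. *)
Record system := System {
  state : finType;
  init : 'I_N -> state;
  trans : 'I_N -> state -> action M -> state -> bool;
  trans_own : forall i q x q', trans i q x q' -> actor x = i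
}.

Arguments trans : clear implicits.
Arguments init : clear implicits.
Variable Sys : system.

Record config := Config {
  cst : {ffun 'I_N -> state Sys};
  cch : {ffun 'I_N * 'I_N -> seq M}
}.

Definition c0 : config := Config [ffun i => init Sys i] [ffun _ => [::]].

Definition stable (c : config) : Prop := forall p, cch c p = [::].

Inductive step : config -> action M -> config -> Prop :=
| step_send (a : M) (c : config) (q' : state Sys) :
    trans Sys (src a) (cst c (src a)) (Snd a) q' ->
    step c (Snd a)
      (Config [ffun k => if k == src a then q' else cst c k]
              [ffun p => if p == (src a, dst a) then rcons (cch c p) a
                         else cch c p])
| step_recv (a : M) (c : config) (w : seq M) (q' : state Sys) :
    cch c (src a, dst a) = a :: w ->
    trans Sys (dst a) (cst c (dst a)) (Rcv a) q' ->
    step c (Rcv a)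
      (Config [ffun k => if k == dst a then q' else cst c k]
              [ffun p => if p == (src a, dst a) then w else cch c p]).

Inductive run : config -> seq (action M) -> config -> Prop :=
| run_nil c : run c [::] c
| run_cons c x c' tau c'' : step c x c' -> run c' tau c'' -> run c (x :: tau) c''.

Definition T (k : nat) (tau : seq (action M)) : Prop :=
  (if k is 0 then synchronous tau else kbounded_fifo k tau) /\
  exists c, run c0 tau c.

(* ST_k(S), elements of the (disjoint) union encoded in a sum type. *)
Definition ST (k : nat) (x : seq M + (seq M * config)) : Prop :=
  match x with
  | inl w => exists tau, T k tau /\ pi_send tau = w
  | inr (w, c) => exists tau, T k tau /\ pi_send tau = w /\ run c0 tau c /\ stable c
  end.

Definition one_synchronizable : Prop := forall x, ST 0 x <-> ST 1 x.

End Defs.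

(* Main.v *)
Require Import Defs.
From mathcomp Require Import all_boot.
Set Implicit Arguments. Unset Strict Implicit. Unset Printing Implicit Defensive.

Inductive lrun (Ms : msgset) (S : system Ms) (i : 'I_(npeers Ms)) :
  state S -> seq (action (msg Ms)) -> state S -> Prop :=
| lrun_nil q : @lrun Ms S i q [::] q
| lrun_cons q x q1 s q' : @trans Ms S i q x q1 -> @lrun Ms S i q1 s q' -> @lrun Ms S i q (x :: s) q'.

Definition chstep (Ms : msgset) (ch : {ffun 'I_(npeers Ms) * 'I_(npeers Ms) -> seq (msg Ms)})
  (x : action (msg Ms)) : option {ffun 'I_(npeers Ms) * 'I_(npeers Ms) -> seq (msg Ms)} :=
  match x with
  | Snd a => Some [ffun p => if p == (src a, dst a) then rcons (ch p) a else ch p]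
  | Rcv a => if ch (src a, dst a) is b :: w then
               (if b == a then Some [ffun p => if p == (src a, dst a) then w else ch p] else None)
             else None
  end.

Fixpoint chrun (Ms : msgset) ch (tau : seq (action (msg Ms))) :=
  match tau with
  | [::] => Some ch
  | x :: t => if chstep ch x is Some ch1 then chrun ch1 t else None
  end.

Lemma run_iff (Ms : msgset) (S : system Ms) c tau c' :
  @run Ms S c tau c' <->
  (chrun (cch c) tau = Some (cch c') /\
   forall i, @lrun Ms S i (cst c i) [seq x <- tau | actor x == i] (cst c' i)).
Proof.
split.
- elim=> {c tau c'} [c0|c0 x c1 tau0 c'' st _ [IH1 IH2]].
    by split=> // i; constructor.
  case: st IH1 IH2 => [a c2 q' tr|a c2 w q' hw tr] /= IH1 IH2.
  + split; first by [].
    move=> i; have := IH2 i; rewrite ffunE /=; case: eqP => [->|ne] H.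
      by rewrite eqxx; econstructor; eauto.
    by case: eqP => // e; case: ne.
  + split; first by rewrite hw eqxx.
    move=> i; have := IH2 i; rewrite ffunE /=; case: eqP => [->|ne] H.
      by rewrite eqxx; econstructor; eauto.
    by case: eqP => // e; case: ne.
- elim: tau c => [|x tau IH] [st ch] /=.
    case=> [[E] H].
    have -> : {| cst := st; cch := ch |} = c'.
      case: c' E H => st' ch' /= -> H; congr Config; apply/ffunP=> i.
      by have := H i => H'; inversion H'.
    by constructor.
  case=> H1 H2.
  have [q1 tr1 H3] : exists2 q1, @trans Ms S (actor x) (st (actor x)) x q1 &
     @lrun Ms S (actor x) q1 [seq y <- tau | actor y == actor x] (cst c' (actor x)).
    have := H2 (actor x); rewrite /= eqxx => H; inversion H; subst.
    by eexists; eassumption.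
  case: x H1 H2 tr1 H3 => [a|a] /= H1 H2 tr1 H3.
  + apply: (run_cons (@step_send Ms S a (Config st ch) _ tr1)).
    apply: IH; split; first by [].
    move=> i /=; rewrite ffunE; case: eqP => [->//|ne].
    by have := H2 i; case: eqP => // e; move: ne; rewrite e.
  + move: H1; case E: (ch (src a, dst a)) => [//|b w].
    case: eqP => // eb; subst b => H1.
    apply: (run_cons (@step_recv Ms S a (Config st ch) _ _ E tr1)).
    apply: IH; split; first by [].
    move=> i /=; rewrite ffunE; case: eqP => [->//|ne].
    by have := H2 i; case: eqP => // e; move: ne; rewrite e.
Qed.

Lemma chrun_cat (Ms : msgset) ch (s t : seq (action (msg Ms))) :
  chrun ch (s ++ t) = obind (fun c => @chrun Ms c t) (chrun ch s).
Proof.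
elim: s ch => [//|x s IH] ch /=; case: (chstep ch x) => //.
Qed.

Lemma lrun_prefix (Ms : msgset) (S : system Ms) i q u v q' :
  @lrun Ms S i q (u ++ v) q' -> exists q'', @lrun Ms S i q u q''.
Proof.
elim: u q => [|x u IH] q /=; first by exists q; constructor.
move=> H; inversion H; subst.
have [q'' H'] := IH _ H5; exists q''; econstructor; eauto.
Qed.

Lemma sync_word_cat (Ms : msgset) (s t : seq (msg Ms)) :
  sync_word (s ++ t) = sync_word s ++ sync_word t.
Proof. by rewrite /sync_word map_cat flatten_cat. Qed.

Lemma sync_word_cons (Ms : msgset) (b : msg Ms) s :
  sync_word (b :: s) = Snd b :: Rcv b :: sync_word s.
Proof. by []. Qed.

Lemma pi_send_sync (Ms : msgset) (s : seq (msg Ms)) : pi_send (sync_word s) = s.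
Proof. by elim: s => //= b s IH; rewrite /pi_send /= -/(pi_send _) IH. Qed.

Lemma pi_send_cat (Ms : msgset) (s t : seq (action (msg Ms))) :
  pi_send (s ++ t) = pi_send s ++ pi_send t.
Proof. by rewrite /pi_send pmap_cat. Qed.

Lemma filter_sync (Ms : msgset) (p : 'I_(npeers Ms)) (s : seq (msg Ms)) :
  (forall b, b \in s -> src b = p) ->
  [seq x <- sync_word s | actor x == p] = map Snd s.
Proof.
elim: s => // b s IH H; rewrite sync_word_cons /= H ?mem_head // eqxx.
have -> : (dst b == p) = false.
  by apply/negbTE; rewrite -(H b (mem_head _ _)) eq_sym src_neq_dst.
by rewrite IH // => c hc; apply: H; rewrite in_cons hc orbT.
Qed.

Lemma take_sync_snd (Ms : msgset) (s : seq (msg Ms)) a m :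
  exists s' e, take m (sync_word s ++ [:: Snd a]) = sync_word s' ++ e /\
    (e = [::] \/ exists b, e = [:: Snd b]).
Proof.
elim: s m => [|b s IH] m.
  case: m => [|m]; first by exists [::], [::]; split; [|left].
  by exists [::], [:: Snd a]; rewrite /= ?take0; split; [|right; exists a].
case: m => [|[|m]]; first by exists [::], [::]; split; [|left].
  by exists [::], [:: Snd b]; rewrite sync_word_cons /= ?take0; split; [|right; exists b].
have [s' [e [E He]]] := IH m.
by exists (b :: s'), e; rewrite sync_word_cons /= E.
Qed.

Lemma sent_recv_sync (Ms : msgset) i j (s : seq (msg Ms)) :
  sent_on i j (sync_word s) = recv_on i j (sync_word s).
Proof.
elim: s => // b s IH; rewrite sync_word_cons /sent_on /recv_on /=.
by rewrite -/(sent_on _ _ _) -/(recv_on _ _ _) IH; case: ifP.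
Qed.

Lemma kb_sync_snd (Ms : msgset) (s : seq (msg Ms)) a :
  kbounded_fifo 1 (sync_word s ++ [:: Snd a]).
Proof.
move=> m i j; have [s' [e [-> He]]] := take_sync_snd s a m.
exists (sent_on i j e).
rewrite /sent_on /recv_on !pmap_cat -/(sent_on _ _ _) -/(recv_on _ _ _) sent_recv_sync.
case: He => [->|[b ->]] /=; first by rewrite !cats0.
by rewrite cats0; split=> //; case: ifP.
Qed.

Theorem lemma4p4 (Ms : msgset) (S : system Ms) (tau : seq (action (msg Ms)))
    (as_ : seq (msg Ms)) :
  one_synchronizable S ->
  T S 0 tau ->
  T S (size as_) (tau ++ [seq Snd a | a <- as_]) ->
  (forall a b, a \in as_ -> b \in as_ -> src a = src b) ->
  T S 0 (tau ++ sync_word as_).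
Proof.
move=> H1s [[s0 ->] runT] [_ [cY runY]] hsrc.
case Eas: as_ => [|a0 l]; first by rewrite cats0; split=> //; exists s0.
rewrite -Eas.
suff: forall k, k <= size as_ -> T S 0 (sync_word (s0 ++ take k as_)).
  by move=> /(_ (size as_) (leqnn _)); rewrite take_size sync_word_cat.
elim=> [_|k IH hk]; first by rewrite take0 cats0; split=> //; exists s0.
have [_ [cX runX]] := IH (ltnW hk).
set a := nth a0 as_ k.
have ha : a \in as_ by apply: mem_nth.
set p := src a.
have hp : forall b, b \in as_ -> src b = p by move=> b hb; apply: hsrc.
set X := sync_word (s0 ++ take k as_).
have TZ : T S 1 (X ++ [:: Snd a]).
  split; first by apply: kb_sync_snd.
  move/run_iff: runX => [chX lX].
  move/run_iff: runY => [chY lY].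
  have [qZ lZ] : exists qZ, @lrun Ms S p (cst (c0 S) p)
      [seq x <- X ++ [:: Snd a] | actor x == p] qZ.
    have fY : [seq x <- [seq Snd b | b <- as_] | actor x == p] = [seq Snd b | b <- as_].
      by apply/all_filterP; rewrite all_map; apply/allP => b hb /=; rewrite hp.
    have E : [seq Snd b | b <- as_] = [seq Snd b | b <- take k as_] ++ [:: Snd a] ++
        [seq Snd b | b <- drop k.+1 as_].
      by rewrite -[in LHS](cat_take_drop k.+1 as_) (take_nth a0 hk) -cats1 !map_cat -catA.
    have := lY p; rewrite filter_cat fY E !catA => /lrun_prefix.
    rewrite /X sync_word_cat !filter_cat (filter_sync (s := take k as_)); last first.
      by move=> b hb; apply: hp; apply: (mem_take hb).
    by rewrite /= eqxx ?catA.
  exists (Config [ffun i => if i == p then qZ else cst cX i]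
     [ffun q => if q == (src a, dst a) then rcons (cch cX q) a else cch cX q]).
  apply/run_iff; split.
    by rewrite chrun_cat chX.
  move=> i /=; rewrite !ffunE; case: (eqVneq i p) => [->|ne].
    by move: lZ; rewrite /= ?ffunE ?eqxx.
  rewrite filter_cat /= -/p eq_sym (negbTE ne) cats0.
  by have := lX i; rewrite ffunE.
have := H1s (inl (pi_send (X ++ [:: Snd a]))).
case=> _ /(_ (ex_intro _ _ (conj TZ erefl))) [tau' [[[s' Es] Hr] Hp]].
move: Hp; rewrite Es pi_send_sync pi_send_cat pi_send_sync /= => Es'.
move: Es Hr; rewrite Es' (take_nth a0 hk) -cats1 catA => Es Hr.
by split; [exists ((s0 ++ take k as_) ++ [:: nth a0 as_ k]) | rewrite -Es].
Qed.
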